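(* Let $G$ and $H$ be connected graphs, each with at least $2$ vertices, neither of which contains a pair of true twins. Then the strong product $G\boxtimes H$ is $1$-perfectly orientable if and only if one of $G$, $H$ is isomorphic to $P_3$ and the other is isomorphic to $R_n$ for some $n\ge 1$ or to $R_n\ast K_1$ for some $n\ge 0$.
   Context: All graphs are finite and simple. An orientation of a graph $G$ is $1$-perfect if the out-neighborhood of every vertex induces a clique in $G$; $G$ is $1$-perfectly orientable if it admits a $1$-perfect orientation. Two distinct vertices $u,v$ are true twins if $N[u]=N[v]$ (closed neighborhoods). The strong product $G\boxtimes H$ has vertex set $V(G)\times V(H)$, with distinct $(u,v),(u',v')$ adjacent iff $u'\in N_G[u]$ and $v'\in N_H[v]$. $P_3$ is the path on $3$ vertices. For an integer $n\ge 0$, the raft $R_n$ is the graph with vertex set $X\cup Y$, where $X=\{x_0,\dots,x_n\}$ and $Y=\{y_0,\dots,y_n\}$ are disjoint cliques, and, for $0\le i,j\le n$, $x_i$ is adjacent to $y_j$ iff $i+j\ge n+1$ (no other edges). $R_n\ast K_1$ is $R_n$ with an added vertex adjacent to all vertices of $R_n$. *)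

(* Defs.v *)
From mathcomp Require Import all_boot.
Set Implicit Arguments. Unset Strict Implicit. Unset Printing Implicit Defensive.

Definition simple_graph (T : finType) (e : rel T) : Prop :=
  symmetric e /\ irreflexive e.

Definition connected_graph (T : finType) (e : rel T) : Prop :=
  forall x y : T, connect e x y.

Definition cnbhd (T : finType) (e : rel T) (u : T) : pred T :=
  fun w => (w == u) || e u w.

Definition true_twins (T : finType) (e : rel T) (u v : T) : Prop :=
  u != v /\ cnbhd e u =1 cnbhd e v.

Definition twin_free (T : finType) (e : rel T) : Prop :=
  forall u v : T, ~ true_twins e u v.

Definition strong_prod (T1 T2 : finType) (e1 : rel T1) (e2 : rel T2)
  : rel (T1 * T2)%type :=
  fun x y => [&& x != y, cnbhd e1 x.1 y.1 & cnbhd e2 x.2 y.2].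

Definition orientation (T : finType) (e : rel T) (o : rel T) : Prop :=
  (forall u v, o u v -> e u v) /\
  (forall u v, e u v -> (o u v && ~~ o v u) || (o v u && ~~ o u v)).

Definition one_perfect (T : finType) (e : rel T) (o : rel T) : Prop :=
  orientation e o /\
  (forall v u w, o v u -> o v w -> u != w -> e u w).

Definition one_perfectly_orientable (T : finType) (e : rel T) : Prop :=
  exists o : rel T, one_perfect e o.

Definition graph_iso (T T' : finType) (e : rel T) (e' : rel T') : Prop :=
  exists f : T -> T', bijective f /\ forall x y, e' (f x) (f y) = e x y.

Definition P3_rel : rel 'I_3 :=
  fun i j => (i.+1 == j :> nat) || (j.+1 == i :> nat).

(* raft R_n: vertex (false, i) is x_i, vertex (true, j) is y_j *)
Definition raft_rel (n : nat) : rel (bool * 'I_n.+1)%type :=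
  fun a b =>
    (a != b) &&
    (if a.1 == b.1 then true else (n.+1 <= a.2 + b.2)).

(* R_n * K_1: None is the added universal vertex *)
Definition raft_K1_rel (n : nat) : rel (option (bool * 'I_n.+1)) :=
  fun a b =>
    match a, b with
    | None, None => false
    | None, Some _ => true
    | Some _, None => true
    | Some a', Some b' => @raft_rel n a' b'
    end.

Definition raft_like (T : finType) (e : rel T) : Prop :=
  (exists n, 1 <= n /\ graph_iso (@raft_rel n) e) \/
  (exists n, graph_iso (@raft_K1_rel n) e).

(* Main.v *)
Require Import Defs.
From mathcomp Require Import all_boot.
From mathcomp Require Import zify.
Set Implicit Arguments. Unset Strict Implicit. Unset Printing Implicit Defensive.

Definition emb (T T' : finType) (e : rel T) (e' : rel T') (f : T -> T') :=
  injective f /\ forall a b, e' (f a) (f b) = e a b.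

Lemma opo_emb (T T' : finType) (e : rel T) (e' : rel T') (f : T -> T') :
  emb e e' f -> one_perfectly_orientable e' -> one_perfectly_orientable e.
Proof.
move=> [fi fe] [o [[o1 o2] o3]].
exists (fun a b => o (f a) (f b)); split; first split.
- by move=> u v /o1; rewrite fe.
- by move=> u v; rewrite -fe => /o2.
- move=> v u w h1 h2 nuw; rewrite -fe; apply: (o3 _ _ _ h1 h2).
  by apply: contra nuw => /eqP /fi ->.
Qed.

Lemma emb_comp (T T' T'' : finType) (e : rel T) (e' : rel T') (e'' : rel T'')
  f g : emb e e' f -> emb e' e'' g -> emb e e'' (g \o f).
Proof.
move=> [fi fe] [gi ge]; split; first exact: inj_comp.
by move=> a b /=; rewrite ge fe.
Qed.

Lemma cnbhd_emb (T T' : finType) (e : rel T) (e' : rel T') f :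
  emb e e' f -> forall a b, cnbhd e' (f a) (f b) = cnbhd e a b.
Proof.
move=> [fi fe] a b; rewrite /cnbhd fe; congr (_ || _).
by apply/eqP/eqP => [/fi|->].
Qed.

Lemma emb_prod (T1 T2 T1' T2' : finType) (e1 : rel T1) (e2 : rel T2)
  (e1' : rel T1') (e2' : rel T2') f1 f2 :
  emb e1 e1' f1 -> emb e2 e2' f2 ->
  emb (strong_prod e1 e2) (strong_prod e1' e2') (fun x => (f1 x.1, f2 x.2)).
Proof.
move=> h1 h2; split.
- move=> [a b] [c d] [] /(proj1 h1) -> /(proj1 h2) -> //.
- move=> [a b] [c d]; rewrite /strong_prod /= !(cnbhd_emb h1) !(cnbhd_emb h2).
  congr (_ && _); rewrite !xpair_eqE.
  by rewrite (inj_eq (proj1 h1)) (inj_eq (proj1 h2)).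
Qed.

Lemma emb_swap (T1 T2 : finType) (e1 : rel T1) (e2 : rel T2) :
  emb (strong_prod e1 e2) (strong_prod e2 e1) (fun x => (x.2, x.1)).
Proof.
split.
- by move=> [a b] [c d] [] -> ->.
- move=> [a b] [c d]; rewrite /strong_prod /= !xpair_eqE.
  by rewrite [(b == d) && _]andbC [cnbhd e2 b d && _]andbC.
Qed.

Lemma iso_emb (T T' : finType) (e : rel T) (e' : rel T') (f : T -> T') :
  graph_iso e e' -> exists f : T -> T', emb e e' f.
Proof. by move=> [g [gb ge]]; exists g; split => //; exact: bij_inj. Qed.

Lemma iso_emb_inv (T T' : finType) (e : rel T) (e' : rel T') :
  graph_iso e e' -> exists f : T' -> T, emb e' e f.
Proof.
move=> [g [[h gh hg] ge]]; exists h; split; first exact: can_inj hg.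
by move=> a b; rewrite -ge !hg.
Qed.


Definition mkrel k (l : seq (nat * nat)) : rel 'I_k :=
  fun i j => ((nat_of_ord i, nat_of_ord j) \in l) || ((nat_of_ord j, nat_of_ord i) \in l).

Definition claw_rel : rel 'I_4 := mkrel [:: (0,1); (0,2); (0,3)].
Definition c4_rel : rel 'I_4 := mkrel [:: (0,1); (1,2); (2,3); (3,0)].
Definition p5_rel : rel 'I_5 := mkrel [:: (0,1); (1,2); (2,3); (3,4)].
Definition bull_rel : rel 'I_5 := mkrel [:: (0,1); (1,2); (2,0); (0,3); (1,4)].
Definition c5_rel : rel 'I_5 := mkrel [:: (0,1); (1,2); (2,3); (3,4); (4,0)].
Definition p4_rel : rel 'I_4 := mkrel [:: (0,1); (1,2); (2,3)].

Section OP.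
Variables (T : finType) (e : rel T) (o : rel T).
Hypothesis Ho : one_perfect e o.
Lemma anti a b : o a b -> ~~ o b a.
Proof.
move=> h; have := (proj2 (proj1 Ho)) a b ((proj1 (proj1 Ho)) _ _ h).
by rewrite h /=; case: (o b a).
Qed.
Lemma tot a b : e a b -> o a b || o b a.
Proof. by move/((proj2 (proj1 Ho)) a b); case: (o a b); case: (o b a). Qed.
Lemma step v u w : o v u -> e v w -> ~~ e u w -> u != w -> o w v.
Proof.
move=> h1 h2 h3 h4; have := (proj2 (proj1 Ho)) v w h2.
case h5: (o v w) => /=; last by rewrite andbT.
by move: h3; rewrite ((proj2 Ho) v u w h1 h5 h4).
Qed.
End OP.

Definition ord_of k (i : nat) : 'I_k.+1 := Ordinal (ltn_pmod i (ltn0Sn k)).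
Definition V {k} (p i : nat) : 'I_3 * 'I_k.+1 := (ord_of 2 p, ord_of k i).
Definition W (p i : nat) : 'I_4 * 'I_4 := (ord_of 3 p, ord_of 3 i).
Lemma no_claw : ~ one_perfectly_orientable (strong_prod P3_rel claw_rel).
Proof.
move=> [o Ho]; have st := step Ho; have an := anti Ho; have tt := tot Ho.
case/orP: (tt (V 0 0) (V 1 2) isT) => h0.
- have h1 := st (V 0 0) (V 1 2) (V 1 1) h0 isT isT isT.
  have h2 := st (V 1 1) (V 0 0) (V 2 0) h1 isT isT isT.
  have h3 := st (V 2 0) (V 1 1) (V 1 3) h2 isT isT isT.
  have h4 := st (V 1 3) (V 2 0) (V 0 0) h3 isT isT isT.
  have h5 := st (V 0 0) (V 1 3) (V 1 2) h4 isT isT isT.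
  by move: (an _ _ h0); rewrite h5.
- have h1 := st (V 1 2) (V 0 0) (V 2 0) h0 isT isT isT.
  have h2 := st (V 2 0) (V 1 2) (V 1 1) h1 isT isT isT.
  have h3 := st (V 1 1) (V 2 0) (V 0 0) h2 isT isT isT.
  have h4 := st (V 0 0) (V 1 1) (V 1 3) h3 isT isT isT.
  have h5 := st (V 1 3) (V 0 0) (V 2 0) h4 isT isT isT.
  have h6 := st (V 2 0) (V 1 3) (V 1 2) h5 isT isT isT.
  have h7 := st (V 1 2) (V 2 0) (V 0 0) h6 isT isT isT.
  by move: (an _ _ h0); rewrite h7.
Qed.

Lemma no_c4 : ~ one_perfectly_orientable (strong_prod P3_rel c4_rel).
Proof.
move=> [o Ho]; have st := step Ho; have an := anti Ho; have tt := tot Ho.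
case/orP: (tt (V 1 0) (V 1 1) isT) => h0.
- have h1 := st (V 1 0) (V 1 1) (V 0 3) h0 isT isT isT.
  have h2 := st (V 0 3) (V 1 0) (V 1 2) h1 isT isT isT.
  have h3 := st (V 1 2) (V 0 3) (V 2 3) h2 isT isT isT.
  have h4 := st (V 2 3) (V 1 2) (V 1 0) h3 isT isT isT.
  have h5 := st (V 1 0) (V 2 3) (V 1 1) h4 isT isT isT.
  by move: (an _ _ h0); rewrite h5.
- have h1 := st (V 1 1) (V 1 0) (V 0 2) h0 isT isT isT.
  have h2 := st (V 0 2) (V 1 1) (V 1 3) h1 isT isT isT.
  have h3 := st (V 1 3) (V 0 2) (V 2 2) h2 isT isT isT.
  have h4 := st (V 2 2) (V 1 3) (V 1 1) h3 isT isT isT.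
  have h5 := st (V 1 1) (V 2 2) (V 1 0) h4 isT isT isT.
  by move: (an _ _ h0); rewrite h5.
Qed.

Lemma no_p5 : ~ one_perfectly_orientable (strong_prod P3_rel p5_rel).
Proof.
move=> [o Ho]; have st := step Ho; have an := anti Ho; have tt := tot Ho.
case/orP: (tt (V 0 1) (V 1 2) isT) => h0.
- have h1 := st (V 0 1) (V 1 2) (V 1 0) h0 isT isT isT.
  have h2 := st (V 1 0) (V 0 1) (V 2 1) h1 isT isT isT.
  have h3 := st (V 2 1) (V 1 0) (V 1 2) h2 isT isT isT.
  have h4 := st (V 1 2) (V 2 1) (V 0 3) h3 isT isT isT.
  have h5 := st (V 0 3) (V 1 2) (V 1 4) h4 isT isT isT.
  have h6 := st (V 1 4) (V 0 3) (V 2 3) h5 isT isT isT.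
  have h7 := st (V 2 3) (V 1 4) (V 1 2) h6 isT isT isT.
  have h8 := st (V 1 2) (V 2 3) (V 2 1) h7 isT isT isT.
  have h9 := st (V 2 1) (V 1 2) (V 1 0) h8 isT isT isT.
  have h10 := st (V 1 0) (V 2 1) (V 0 1) h9 isT isT isT.
  have h11 := st (V 0 1) (V 1 0) (V 1 2) h10 isT isT isT.
  by move: (an _ _ h0); rewrite h11.
- have h1 := st (V 1 2) (V 0 1) (V 0 3) h0 isT isT isT.
  have h2 := st (V 0 3) (V 1 2) (V 1 4) h1 isT isT isT.
  have h3 := st (V 1 4) (V 0 3) (V 2 3) h2 isT isT isT.
  have h4 := st (V 2 3) (V 1 4) (V 1 2) h3 isT isT isT.
  have h5 := st (V 1 2) (V 2 3) (V 0 1) h4 isT isT isT.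
  by move: (an _ _ h0); rewrite h5.
Qed.

Lemma no_bull : ~ one_perfectly_orientable (strong_prod P3_rel bull_rel).
Proof.
move=> [o Ho]; have st := step Ho; have an := anti Ho; have tt := tot Ho.
case/orP: (tt (V 0 0) (V 1 3) isT) => h0.
- have h1 := st (V 0 0) (V 1 3) (V 0 1) h0 isT isT isT.
  have h2 := st (V 0 1) (V 0 0) (V 1 4) h1 isT isT isT.
  have h3 := st (V 1 4) (V 0 1) (V 2 1) h2 isT isT isT.
  have h4 := st (V 2 1) (V 1 4) (V 1 2) h3 isT isT isT.
  have h5 := st (V 1 2) (V 2 1) (V 0 0) h4 isT isT isT.
  have h6 := st (V 0 0) (V 1 2) (V 1 3) h5 isT isT isT.
  by move: (an _ _ h0); rewrite h6.
- have h1 := st (V 1 3) (V 0 0) (V 2 0) h0 isT isT isT.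
  have h2 := st (V 2 0) (V 1 3) (V 1 2) h1 isT isT isT.
  have h3 := st (V 1 2) (V 2 0) (V 0 1) h2 isT isT isT.
  have h4 := st (V 0 1) (V 1 2) (V 1 4) h3 isT isT isT.
  have h5 := st (V 1 4) (V 0 1) (V 2 1) h4 isT isT isT.
  have h6 := st (V 2 1) (V 1 4) (V 2 0) h5 isT isT isT.
  have h7 := st (V 2 0) (V 2 1) (V 1 3) h6 isT isT isT.
  have h8 := st (V 1 3) (V 2 0) (V 0 0) h7 isT isT isT.
  by move: (an _ _ h0); rewrite h8.
Qed.

Lemma no_c5 : ~ one_perfectly_orientable (strong_prod P3_rel c5_rel).
Proof.
move=> [o Ho]; have st := step Ho; have an := anti Ho; have tt := tot Ho.
case/orP: (tt (V 1 0) (V 1 1) isT) => h0.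
- have h1 := st (V 1 0) (V 1 1) (V 2 4) h0 isT isT isT.
  have h2 := st (V 2 4) (V 1 0) (V 1 3) h1 isT isT isT.
  have h3 := st (V 1 3) (V 2 4) (V 0 4) h2 isT isT isT.
  have h4 := st (V 0 4) (V 1 3) (V 1 0) h3 isT isT isT.
  have h5 := st (V 1 0) (V 0 4) (V 1 1) h4 isT isT isT.
  by move: (an _ _ h0); rewrite h5.
- have h1 := st (V 1 1) (V 1 0) (V 0 2) h0 isT isT isT.
  have h2 := st (V 0 2) (V 1 1) (V 1 3) h1 isT isT isT.
  have h3 := st (V 1 3) (V 0 2) (V 2 2) h2 isT isT isT.
  have h4 := st (V 2 2) (V 1 3) (V 1 1) h3 isT isT isT.
  have h5 := st (V 1 1) (V 2 2) (V 1 0) h4 isT isT isT.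
  by move: (an _ _ h0); rewrite h5.
Qed.

Lemma no_p4p4 : ~ one_perfectly_orientable (strong_prod p4_rel p4_rel).
Proof.
move=> [o Ho]; have st := step Ho; have an := anti Ho; have tt := tot Ho.
case/orP: (tt (W 0 1) (W 1 2) isT) => h0.
- have h1 := st (W 0 1) (W 1 2) (W 1 0) h0 isT isT isT.
  have h2 := st (W 1 0) (W 0 1) (W 2 1) h1 isT isT isT.
  have h3 := st (W 2 1) (W 1 0) (W 1 2) h2 isT isT isT.
  have h4 := st (W 1 2) (W 2 1) (W 2 3) h3 isT isT isT.
  have h5 := st (W 2 3) (W 1 2) (W 3 2) h4 isT isT isT.
  have h6 := st (W 3 2) (W 2 3) (W 2 1) h5 isT isT isT.
  have h7 := st (W 2 1) (W 3 2) (W 1 0) h6 isT isT isT.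
  have h8 := st (W 1 0) (W 2 1) (W 0 1) h7 isT isT isT.
  have h9 := st (W 0 1) (W 1 0) (W 1 2) h8 isT isT isT.
  by move: (an _ _ h0); rewrite h9.
- have h1 := st (W 1 2) (W 0 1) (W 2 1) h0 isT isT isT.
  have h2 := st (W 2 1) (W 1 2) (W 3 2) h1 isT isT isT.
  have h3 := st (W 3 2) (W 2 1) (W 2 3) h2 isT isT isT.
  have h4 := st (W 2 3) (W 3 2) (W 1 2) h3 isT isT isT.
  have h5 := st (W 1 2) (W 2 3) (W 0 1) h4 isT isT isT.
  by move: (an _ _ h0); rewrite h5.
Qed.


Lemma emb_id (T : finType) (e : rel T) : emb e e id.
Proof. by split. Qed.

Lemma emb_nth (T : finType) (e : rel T) k (F : rel 'I_k) (s : seq T) x0 :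
  size s = k -> uniq s ->
  (forall i j : 'I_k, e (nth x0 s i) (nth x0 s j) = F i j) ->
  emb F e (fun i => nth x0 s i).
Proof.
move=> hs hu hF; split => // i j /eqP; rewrite nth_uniq ?hs // => /eqP.
exact: val_inj.
Qed.

Ltac solve_pat :=
  match goal with
  | |- is_true _ => assumption
  | |- _ = true => assumption
  | |- _ = false => apply/negbTE; assumption
  end.

Ltac prep_sym e sym :=
  repeat match goal with
  | h : is_true (e ?a ?b) |- _ =>
     lazymatch goal with
     | _ : is_true (e b a) |- _ => fail
     | _ => have := h; rewrite sym => ?
     end
  | h : is_true (~~ e ?a ?b) |- _ =>
     lazymatch goal with
     | _ : is_true (~~ e b a) |- _ => fail
     | _ => have := h; rewrite sym => ?
     end
  | h : is_true (?a != ?b) |- _ =>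
     lazymatch goal with
     | _ : is_true (b != a) |- _ => fail
     | _ => have := h; rewrite eq_sym => ?
     end
  end.

Section Pat.
Variables (T : finType) (e : rel T).
Hypothesis sg : simple_graph e.
Hypothesis Hopo : one_perfectly_orientable (strong_prod P3_rel e).

Lemma ne_of a b : e a b -> a != b.
Proof. by apply: contraTneq => ->; rewrite (proj2 sg). Qed.

Lemma no_pat k (F : rel 'I_k) (s : seq T) x0 :
  ~ one_perfectly_orientable (strong_prod P3_rel F) -> size s = k -> uniq s ->
  (forall i j : 'I_k, e (nth x0 s i) (nth x0 s j) = F i j) -> False.
Proof.
move=> nF hs hu hF; apply: nF; apply: (opo_emb _ Hopo).
exact: (emb_prod (emb_id P3_rel) (emb_nth hs hu hF)).
Qed.

Lemma eqF a : e a a = false. Proof. exact: (proj2 sg). Qed.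

Ltac finish_pat :=
  match goal with
  | |- context [uniq _] => rewrite /= !inE !negb_or; by repeat (apply/andP; split)
  | _ => let i := fresh in let j := fresh in
         move=> [[|[|[|[|[|i]]]]] ?] [[|[|[|[|[|j]]]]] ?] //=;
         rewrite /= ?eqF //;
         match goal with |- _ = ?r => let v := eval vm_compute in r in change r with v end;
         solve_pat
  end.

Ltac mk_ne :=
  repeat match goal with
  | h : is_true (e ?a ?b) |- _ =>
     lazymatch goal with
     | _ : is_true (a != b) |- _ => fail
     | _ => have := ne_of h => ?
     end
  end.

Lemma noclaw a b c d : e a b -> e a c -> e a d -> ~~ e b c -> ~~ e b d -> ~~ e c d ->
  b != c -> b != d -> c != d -> False.
Proof.
move=> *; mk_ne; prep_sym e (proj1 sg).
apply: (@no_pat 4 claw_rel [:: a; b; c; d] a no_claw) => //; finish_pat.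
Qed.
Lemma noc4 a b c d : e a b -> e b c -> e c d -> e d a -> ~~ e a c -> ~~ e b d ->
  a != c -> b != d -> False.
Proof.
move=> *; mk_ne; prep_sym e (proj1 sg).
apply: (@no_pat 4 c4_rel [:: a; b; c; d] a no_c4) => //; finish_pat.
Qed.

Lemma nop5 a b c d f : e a b -> e b c -> e c d -> e d f ->
  ~~ e a c -> ~~ e a d -> ~~ e a f -> ~~ e b d -> ~~ e b f -> ~~ e c f ->
  a != c -> a != d -> a != f -> b != d -> b != f -> c != f -> False.
Proof.
move=> *; mk_ne; prep_sym e (proj1 sg).
apply: (@no_pat 5 p5_rel [:: a; b; c; d; f] a no_p5) => //; finish_pat.
Qed.

Lemma nobull a b c d f : e a b -> e b c -> e c a -> e a d -> e b f ->
  ~~ e a f -> ~~ e b d -> ~~ e c d -> ~~ e c f -> ~~ e d f ->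
  a != f -> b != d -> c != d -> c != f -> d != f -> False.
Proof.
move=> *; mk_ne; prep_sym e (proj1 sg).
apply: (@no_pat 5 bull_rel [:: a; b; c; d; f] a no_bull) => //; finish_pat.
Qed.

Lemma noc5 a b c d f : e a b -> e b c -> e c d -> e d f -> e f a ->
  ~~ e a c -> ~~ e a d -> ~~ e b d -> ~~ e b f -> ~~ e c f ->
  a != c -> a != d -> b != d -> b != f -> c != f -> False.
Proof.
move=> *; mk_ne; prep_sym e (proj1 sg).
apply: (@no_pat 5 c5_rel [:: a; b; c; d; f] a no_c5) => //; finish_pat.
Qed.
End Pat.


Lemma card_inj_bound (T : finType) (A : {pred T}) (f : T -> nat) m :
  {in A &, injective f} -> {in A, forall a, f a < m} -> #|A| <= m.
Proof.
case: m => [|m] fi fb.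
  rewrite leqn0; apply/eqP/eq_card0 => a; apply/negbTE/negP => /fb.
  by rewrite ltn0.
pose g a : 'I_m.+1 := inord (f a).
have gi : {in A &, injective g}.
  move=> a b aA bA /(congr1 (@nat_of_ord _)); rewrite /g !inordK ?fb //; exact: fi.
rewrite -(card_in_imset gi); apply: leq_trans (max_card _) _; by rewrite card_ord.
Qed.

Section L.
Variables (T : finType) (e : rel T) (X : {set T}) (n : nat).
Hypotheses (sym : symmetric e) (irr : irreflexive e) (tw : twin_free e).
Hypothesis cX : forall a b, a \in X -> b \in X -> a != b -> e a b.
Hypothesis cY : forall a b, a \notin X -> b \notin X -> a != b -> e a b.
Hypothesis ch : forall x x' y y', x \in X -> x' \in X -> y \notin X -> y' \notin X ->
  e x y -> ~~ e x' y -> e x' y' -> ~~ e x y' -> False.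
Hypothesis nu : forall v, exists w, (w != v) && ~~ e v w.
Hypothesis hX : #|X| = n.+1.

Definition nb v := [set w | e v w & (w \in X) != (v \in X)].
Definition rank v := #|nb v|.

Lemma same_adj a b : a != b -> (a \in X) = (b \in X) -> e a b.
Proof.
move=> ne; case aX: (a \in X) => bX; first by apply: cX.
by apply: cY; rewrite -?bX ?aX.
Qed.

Lemma nested v v' : (v \in X) = (v' \in X) ->
  (nb v \subset nb v') || (nb v' \subset nb v).
Proof.
move=> sv; case: (boolP (nb v \subset nb v')) => //= /subsetPn [y yv ynv'].
apply/subsetP => y' y'v'; apply/negPn/negP => ny'v.
move: yv ynv' y'v' ny'v; rewrite !inE -sv => /andP[evy yX] nv'y /andP[ev'y' y'X] nvy'.
rewrite yX andbT in nv'y; rewrite y'X andbT in nvy'.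
case vX: (v \in X) in yX y'X sv.
- have v'X : v' \in X by rewrite -sv.
  have yX' : y \notin X by move: yX; case: (y \in X).
  have y'X' : y' \notin X by move: y'X; case: (y' \in X).
  exact: (ch vX v'X yX' y'X' evy nv'y ev'y' nvy').
- have v'X : v' \notin X by rewrite -sv.
  have yX' : y \in X by move: yX; case: (y \in X).
  have y'X' : y' \in X by move: y'X; case: (y' \in X).
  by apply: (ch yX' y'X' (negbT vX) v'X); rewrite sym.
Qed.

Lemma nb_eq v v' : (v \in X) = (v' \in X) -> rank v = rank v' -> nb v = nb v'.
Proof.
move=> sv rv; case/orP: (nested sv) => s; apply/eqP.
  by rewrite eqEcard s -/(rank v') -rv /=.
by rewrite eq_sym eqEcard s -/(rank v) rv /=.
Qed.

Lemma mnb v w : (w \in X) != (v \in X) -> (w \in nb v) = e v w.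
Proof. by move=> h; rewrite inE h andbT. Qed.

Lemma rank_inj v v' : (v \in X) = (v' \in X) -> rank v = rank v' -> v = v'.
Proof.
move=> sv rv; have N := nb_eq sv rv.
apply/eqP; apply/negPn/negP => nvv'; apply: (tw (u:=v) (v:=v')); split=> // z.
rewrite /cnbhd; case: (eqVneq z v) => [->|zv].
  by rewrite /= (negbTE nvv') same_adj // eq_sym.
case: (eqVneq z v') => [->|zv'] /=.
  by rewrite same_adj.
case sz: ((z \in X) == (v \in X)).
  rewrite !same_adj // 1?eq_sym //; first by rewrite (eqP sz).
  by rewrite (eqP sz).
have h1 : (z \in X) != (v \in X) by rewrite sz.
have h2 : (z \in X) != (v' \in X) by rewrite -sv.
by rewrite -(mnb h1) -(mnb h2) N.
Qed.

Definition oth v := [set w | (w \in X) != (v \in X)].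

Lemma rank_lt v : rank v < #|oth v|.
Proof.
apply: proper_card; apply/properP; split.
  by apply/subsetP => w; rewrite !inE => /andP[].
case: (nu v) => w /andP [wv nvw]; exists w.
  rewrite inE; apply/negP => /eqP s; move: nvw; rewrite same_adj //.
  by rewrite eq_sym.
by rewrite inE negb_and nvw.
Qed.

Lemma othX v : v \in X -> oth v = ~: X.
Proof. by move=> vX; apply/setP => w; rewrite !inE vX; case: (w \in X). Qed.
Lemma othY v : v \notin X -> oth v = X.
Proof. by move=> vX; apply/setP => w; rewrite !inE (negbTE vX); case: (w \in X). Qed.

Lemma cardY : #|~: X| = n.+1.
Proof.
have le1 : #|X| <= #|~: X|.
  apply: (@card_inj_bound _ _ rank).
    by move=> a b aX bX; apply: rank_inj; rewrite aX bX.
  by move=> a aX; rewrite -(othX aX); exact: rank_lt.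
have le2 : #|~: X| <= #|X|.
  apply: (@card_inj_bound _ _ rank).
    move=> a b; rewrite !inE => aX bX; apply: rank_inj.
    by rewrite (negbTE aX) (negbTE bX).
  by move=> a; rewrite inE => aX; rewrite -(othY aX); exact: rank_lt.
by apply/eqP; rewrite -hX eqn_leq le1 le2.
Qed.

Lemma rank_le v : rank v < n.+1.
Proof.
have := rank_lt v; case vX: (v \in X).
  by rewrite othX // cardY.
by rewrite othY ?vX // hX.
Qed.

Lemma nbY y a : y \notin X -> (a \in nb y) = e y a && (a \in X).
Proof. by move=> yX; rewrite inE (negbTE yX); case: (a \in X). Qed.

Lemma adj_rank x y : x \in X -> y \notin X -> e x y = (n.+1 <= rank x + rank y).
Proof.
move=> xX yX.
have nbyX : X :&: nb y = nb y.
  apply/setP => w; rewrite !inE (negbTE yX); case: (w \in X) => //=.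
  by rewrite andbF.
have dec := cardsID (nb y) X; rewrite nbyX hX -/(rank y) in dec.
have rx := rank_le x.
case exy: (e x y).
- have b : #|X :\: nb y| <= rank x.
    apply: (@card_inj_bound _ _ rank).
      move=> a b; rewrite inE => /andP[_ aX]; rewrite inE => /andP[_ bX].
      by apply: rank_inj; rewrite aX bX.
    move=> a; rewrite inE => /andP [ny aX].
    have nya : ~~ e y a by move: ny; rewrite inE aX (negbTE yX) andbT.
    have yna : y \notin nb a by rewrite inE sym (negbTE nya).
    have ynx : y \in nb x by rewrite inE exy (negbTE yX) xX.
    case/orP: (nested (v:=a) (v':=x) ltac:(by rewrite aX xX)) => s.
      apply: proper_card; apply/properP; split => //; by exists y.
    by move/subsetP: s => /(_ y ynx); rewrite (negbTE yna).
  apply/esym; apply/idP; lia.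
- have b : #|nb y| <= n - rank x.
    apply: (@card_inj_bound _ _ (fun a => rank a - (rank x).+1)).
      move=> a b ay by_ /= h.
      have aX : a \in X by move: ay; rewrite nbY // => /andP[].
      have bX : b \in X by move: by_; rewrite nbY // => /andP[].
      suff lt : forall c, c \in nb y -> rank x < rank c.
        apply: rank_inj; first by rewrite aX bX.
        have := lt _ ay; have := lt _ by_; lia.
      move=> c cy; have cX0 : c \in X by move: cy; rewrite nbY // => /andP[].
      have eyc : e y c by move: cy; rewrite nbY // => /andP[].
      have ync : y \in nb c by rewrite inE -sym eyc (negbTE yX) cX0.
      have ynx : y \notin nb x by rewrite inE exy.
      case/orP: (nested (v:=x) (v':=c) ltac:(by rewrite cX0 xX)) => s.
        apply: proper_card; apply/properP; split => //; by exists y.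
      by move/subsetP: s => /(_ y ync); rewrite (negbTE ynx).
    move=> a ay /=.
    have aX : a \in X by move: ay; rewrite nbY // => /andP[].
    have eya : e y a by move: ay; rewrite nbY // => /andP[].
    have yna : y \in nb a by rewrite inE -sym eya (negbTE yX) aX.
    have ynx : y \notin nb x by rewrite inE exy.
    have lt : rank x < rank a.
      case/orP: (nested (v:=x) (v':=a) ltac:(by rewrite aX xX)) => s.
        apply: proper_card; apply/properP; split => //; by exists y.
      by move/subsetP: s => /(_ y yna); rewrite (negbTE ynx).
    have := rank_le a; lia.
  apply/esym; apply/negbTE; rewrite -ltnNge; rewrite /rank in rx b *; lia.
Qed.

Definition gmap v : bool * 'I_n.+1 := (v \notin X, inord (rank v)).

Lemma g_inj : injective gmap.
Proof.
move=> a b [sX] /(congr1 (@nat_of_ord _)); rewrite !inordK ?rank_le //.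
apply: rank_inj; by move: sX; case: (a \in X); case: (b \in X).
Qed.

Lemma g_rel a b : @raft_rel n (gmap a) (gmap b) = e a b.
Proof.
rewrite /raft_rel; case: (eqVneq a b) => [<-|ne]; first by rewrite eqxx irr.
rewrite (inj_eq g_inj) ne /= !inordK ?rank_le //.
case aX: (a \in X); case bX: (b \in X) => /=.
- by rewrite same_adj // aX bX.
- by rewrite adj_rank ?bX.
- by rewrite sym adj_rank ?aX // addnC.
- by rewrite same_adj // aX bX.
Qed.

Lemma L_iso : graph_iso (@raft_rel n) e.
Proof.
have gb : bijective gmap.
  apply: (inj_card_bij g_inj).
  by rewrite card_prod card_bool card_ord -(cardsC X) hX cardY addnn -mul2n.
case: gb => h gh hg; exists h; split; first by exists gmap.
by move=> a b; rewrite -g_rel !hg.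
Qed.
End L.


Section Str.
Variables (T : finType) (e : rel T).
Hypotheses (sg : simple_graph e) (conn : connected_graph e) (tw : twin_free e).
Hypothesis c2 : 1 < #|T|.
Hypothesis Hopo : one_perfectly_orientable (strong_prod P3_rel e).

Let sym := proj1 sg.
Let irr := proj2 sg.
Lemma es a b : e a b -> e b a. Proof. by rewrite sym. Qed.
Lemma ens a b : ~~ e a b -> ~~ e b a. Proof. by rewrite sym. Qed.
Lemma nes (a b : T) : a != b -> b != a. Proof. by rewrite eq_sym. Qed.
Lemma ne_e a b : e a b -> a != b. Proof. move=> h; exact: (ne_of sg h). Qed.
Lemma neq_e x y z : e x y -> ~~ e x z -> y != z.
Proof. by move=> h1 h2; apply: contraNneq h2 => <-. Qed.
Lemma neq_e2 x y z : e x y -> ~~ e z y -> x != z.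
Proof. by move=> h1 h2; apply: contraNneq h2 => <-. Qed.

Let C4 := noc4 sg Hopo.
Let C5 := noc5 sg Hopo.
Let P5 := nop5 sg Hopo.
Let CL := noclaw sg Hopo.
Let BU := nobull sg Hopo.

Lemma simplicial_ex : exists u, forall p q, e u p -> e u q -> p != q -> e p q.
Proof.
have [x0 _] : exists x0 : T, x0 \in T by apply/card_gt0P; apply: ltn_trans c2.
pose N v := [set w | cnbhd e v w].
have [u _ umin] := @arg_minnP T x0 predT (fun v => #|N v|) isT.
exists u => p q eup euq npq; apply/negPn/negP => nepq.
have ex : forall a b, e u a -> e u b -> a != b -> ~~ e a b ->
    exists r, e a r && ~~ cnbhd e u r.
  move=> a b eua eub nab neab.
  case: (boolP (N a \subset N u)) => [sub|/subsetPn [r ra ru]].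
    have E : N a = N u by apply/eqP; rewrite eqEcard sub umin.
    have : b \in N a by rewrite E inE /cnbhd eub orbT.
    by rewrite inE /cnbhd (negbTE neab) orbF eq_sym (negbTE nab).
  exists r; move: ra ru; rewrite !inE /cnbhd.
  case/orP => [/eqP ->| ear] nru; first by rewrite eua orbT in nru.
  by rewrite ear nru.
have [r /andP [epr nur]] := ex p q eup euq npq nepq.
have [s /andP [eqs nus]] := ex q p euq eup (nes npq) (ens nepq).
move: nur nus; rewrite /cnbhd !negb_or => /andP [rnu nur] /andP [snu nus].
case eqr: (e q r).
  exact: (C4 eup epr (es eqr) (es euq) nur nepq (nes rnu) npq).
case eps: (e p s).
  exact: (C4 eup eps (es eqs) (es euq) nus nepq (nes snu) npq).
have rs : r != s by apply/eqP => E; move: eqr; rewrite E eqs.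
have ps : p != s := nes (neq_e eqs (ens nepq)).
have rq : r != q := neq_e epr nepq.
case ers: (e r s).
  exact: (C5 epr ers (es eqs) (es euq) eup (negbT eps) nepq (ens (negbT eqr))
    (ens nur) (ens nus) ps npq rq rnu snu).
exact: (P5 (es epr) (es eup) euq eqs (ens nur) (ens (negbT eqr)) (negbT ers)
  nepq (negbT eps) nus rnu rq rs npq ps (nes snu)).
Qed.

Section U.
Variable u : T.
Hypothesis simp : forall p q, e u p -> e u q -> p != q -> e p q.

Definition inY v := (v != u) && ~~ e u v.
Definition Y1 v := inY v && [exists x, e u x && e x v].

Lemma Xclique a b : cnbhd e u a -> cnbhd e u b -> a != b -> e a b.
Proof.
rewrite /cnbhd; case/orP => [/eqP ->|ha]; case/orP => [/eqP ->|hb] //.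
- by rewrite eqxx.
- by move=> _; rewrite es.
- exact: simp.
Qed.

Lemma clA y y' x x' : inY y -> inY y' -> e u x -> e x y -> e u x' -> e x' y' ->
  y != y' -> e y y'.
Proof.
move=> /andP [yu nuy] /andP [y'u nuy'] eux exy eux' ex'y' yy'.
apply/negPn/negP => nyy'.
have nxy' : ~~ e x y'.
  apply/negP => exy'.
  exact: (CL (es eux) exy exy' nuy nuy' nyy' (nes yu) (nes y'u) yy').
have nx'y : ~~ e x' y.
  apply/negP => ex'y.
  exact: (CL (es eux') ex'y ex'y' nuy nuy' nyy' (nes yu) (nes y'u) yy').
have xx' : x != x' := neq_e2 exy nx'y.
have exx' : e x x' := simp eux eux' xx'.
exact: (BU exx' (es eux') eux exy ex'y' nxy' nx'y nuy nuy' nyy'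
  (neq_e eux nuy') (neq_e eux' nuy) (nes yu) (nes y'u) yy').
Qed.

Lemma wit v : Y1 v -> exists x, e u x && e x v.
Proof. by case/andP => _ /existsP. Qed.

Lemma clA' y y' : Y1 y -> Y1 y' -> y != y' -> exists x, [&& e u x, e x y & e x y'].
Proof.
move=> Yy Yy' yy'.
have [x /andP [eux exy]] := wit Yy; have [x' /andP [eux' ex'y']] := wit Yy'.
have iy : inY y by case/andP: Yy. have iy' : inY y' by case/andP: Yy'.
have eyy' := clA iy iy' eux exy eux' ex'y' yy'.
case exy': (e x y'); first by exists x; rewrite eux exy exy'.
case ex'y: (e x' y); first by exists x'; rewrite eux' ex'y ex'y'.
case/andP: iy => yu nuy; case/andP: iy' => y'u nuy'.
have xx' : x != x' := neq_e2 exy (negbT ex'y).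
exfalso; exact: (C4 exy eyy' (es ex'y') (simp eux' eux (nes xx')) (negbT exy')
  (ens (negbT ex'y)) (neq_e eux nuy') (nes (neq_e eux' nuy))).
Qed.

Lemma notY1 z : inY z -> ~~ Y1 z -> forall x, e u x -> ~~ e x z.
Proof.
move=> iz nz x eux; apply/negP => exz; move: nz; rewrite /Y1 iz /=.
by move/existsPn => /(_ x); rewrite eux exz.
Qed.

Lemma clB y z y' : Y1 y -> inY z -> e y z -> ~~ Y1 z -> Y1 y' -> y' != y -> y' != z ->
  e y' z.
Proof.
move=> Yy iz eyz nz Yy' y'y y'z; apply/negPn/negP => ny'z.
have [x /and3P [eux exy exy']] := clA' Yy Yy' (nes y'y).
have iy : inY y by case/andP: Yy. have iy' : inY y' by case/andP: Yy'.
case/andP: iy => yu nuy; case/andP: iy' => y'u nuy'; case/andP: (iz) => zu nuz.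
have nxz := notY1 iz nz eux.
have [x1 /andP [eux1 ex1y]] := wit Yy.
have eyy' := clA (proj1 (andP Yy)) (proj1 (andP Yy')) eux exy eux exy' (nes y'y).
exact: (BU (es exy) exy' (es eyy') eyz (es eux) (ens nuy) nxz ny'z (ens nuy') (ens nuz)
  yu (neq_e eux nuz) y'z y'u zu).
Qed.

Definition Sc v := [|| cnbhd e u v, Y1 v | [exists y, Y1 y && e y v]].

Lemma Sc_closed v w : Sc v -> e v w -> Sc w.
Proof.
have case1 : forall v w, cnbhd e u v -> e v w -> Sc w.
  move=> a b ha eab; rewrite /Sc; case hb: (cnbhd e u b) => //=.
  move: ha hb; rewrite /cnbhd; case/orP => [/eqP E|eua].
    by rewrite -E eab orbT.
  move/negbT; rewrite negb_or => /andP [bu nub].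
  apply/orP; left; rewrite /Y1 /inY bu nub /=; apply/existsP; exists a.
  by rewrite eua eab.
have case2 : forall v w, Y1 v -> e v w -> Sc w.
  move=> a b ha eab; rewrite /Sc; case hb: (cnbhd e u b) => //=.
  apply/orP; right; apply/existsP; exists a; by rewrite ha eab.
rewrite /Sc; case/or3P => [hv|hv|/existsP [y /andP [Yy eyv]]] evw.
- exact: case1 hv evw.
- exact: case2 hv evw.
case cv: (cnbhd e u v); first exact: case1 cv evw.
case Yv: (Y1 v); first exact: case2 Yv evw.
case cw: (cnbhd e u w) => //=.
case Yw: (Y1 w) => //=.
apply/existsP.
case eyw: (e y w); first by exists y; rewrite Yy eyw.
exfalso.
have iv : inY v by move/negbT: cv; rewrite /cnbhd /inY negb_or.
have iw : inY w by move/negbT: cw; rewrite /cnbhd /inY negb_or.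
have [x /andP [eux exy]] := wit Yy.
have iy : inY y by case/andP: Yy.
case/andP: (iy) => yu nuy; case/andP: (iv) => vu nuv; case/andP: (iw) => wu nuw.
have nxv := notY1 iv (negbT Yv) eux.
have nxw := notY1 iw (negbT Yw) eux.
have yw : y != w by apply/eqP => E; move: Yw; rewrite -E Yy.
exact: (P5 eux exy eyv evw nuy nuv nuw nxv nxw (negbT eyw) (nes yu) (nes vu) (nes wu)
  (neq_e eux nuv) (neq_e eux nuw) yw).
Qed.

Lemma Sc_all v : Sc v.
Proof.
have : Sc u by rewrite /Sc /cnbhd eqxx.
have := conn u v; case/connectP => p pth ->.
elim: p u pth => [|a p IH] x //= /andP [exa pth] Sx.
apply: IH pth _; exact: Sc_closed Sx exa.
Qed.

Lemma Y1_or v : inY v -> Y1 v || [exists y, Y1 y && e y v].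
Proof.
move=> iv; have := Sc_all v; rewrite /Sc.
have -> : cnbhd e u v = false by move: iv; rewrite /inY /cnbhd; case: (v == u); case: (e u v).
by [].
Qed.

Lemma wit2 v : inY v -> ~~ Y1 v -> exists z, Y1 z && e z v.
Proof.
move=> iv nv; have := Y1_or iv; rewrite (negbTE nv) /=; by move/existsP.
Qed.

Lemma Yclique y y' : inY y -> inY y' -> y != y' -> e y y'.
Proof.
have mixed : forall a b, inY a -> inY b -> a != b -> Y1 a -> ~~ Y1 b -> e a b.
  move=> a b ia ib ab Ya nYb.
  have [z /andP [Yz ezb]] := wit2 ib nYb.
  case: (eqVneq z a) => [<-//|za].
  by apply: (clB Yz ib ezb nYb Ya) => //; rewrite eq_sym.
move=> iy iy' yy'.
case Yy: (Y1 y); case Yy': (Y1 y').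
- have [x /andP [eux exy]] := wit Yy; have [x' /andP [eux' ex'y']] := wit Yy'.
  exact: (clA iy iy' eux exy eux' ex'y' yy').
- exact: mixed iy iy' yy' Yy (negbT Yy').
- by rewrite es // (mixed _ _ iy' iy (nes yy') Yy' (negbT Yy)).
have [z /andP [Yz ezy]] := wit2 iy (negbT Yy).
have [z' /andP [Yz' ez'y']] := wit2 iy' (negbT Yy').
have ez'y : e z' y.
  case: (eqVneq z' z) => [->//|z'z].
  apply: (clB Yz iy ezy (negbT Yy) Yz') => //.
  by apply/eqP => E; move: Yy; rewrite -E Yz'.
apply/negPn/negP => nyy'.
have [x' /andP [eux' ex'z']] := wit Yz'.
have nx'y := notY1 iy (negbT Yy) eux'.
have nx'y' := notY1 iy' (negbT Yy') eux'.
case/andP: iy => yu nuy; case/andP: iy' => y'u nuy'.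
exact: (CL (es ex'z') ez'y ez'y' nx'y nx'y' nyy' (neq_e eux' nuy) (neq_e eux' nuy') yy').
Qed.

Lemma inY_cn v : inY v = ~~ cnbhd e u v.
Proof. by rewrite /inY /cnbhd negb_or. Qed.

Lemma chainX x x' y y' : cnbhd e u x -> cnbhd e u x' -> inY y -> inY y' ->
  e x y -> ~~ e x' y -> e x' y' -> ~~ e x y' -> False.
Proof.
move=> cx cx' iy iy' exy nx'y ex'y' nxy'.
have yy' : y != y' := neq_e exy nxy'.
have xx' : x != x' := neq_e2 exy nx'y.
have ne1 : forall a b, cnbhd e u a -> inY b -> a != b.
  by move=> a b ca ib; apply/eqP => E; move: ib; rewrite inY_cn -E ca.
exact: (C4 exy (Yclique iy iy' yy') (es ex'y') (Xclique cx' cx (nes xx')) nxy'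
  (ens nx'y) (ne1 _ _ cx iy') (nes (ne1 _ _ cx' iy))).
Qed.
End U.

Lemma other_ex (u : T) : exists t, t != u.
Proof.
have : 0 < #|[set~ u]| by rewrite cardsC1; move: c2; case: #|T| => [|[]].
by case/card_gt0P => t; rewrite !inE => h; exists t.
Qed.

Lemma nbr_ex (u : T) : exists v, e u v.
Proof.
have [t tu] := other_ex u.
have := conn u t; case/connectP => [[|a p]] /=.
  by move=> _ E; move: tu; rewrite E eqxx.
by case/andP => h _ _; exists a.
Qed.

Theorem structure : raft_like e.
Proof.
have [u simp] := simplicial_ex.
pose X := [set w | cnbhd e u w].
have inX w : (w \in X) = cnbhd e u w by rewrite inE.
have notX w : (w \notin X) = inY u w by rewrite inX inY_cn.
have cX : forall a b, a \in X -> b \in X -> a != b -> e a b.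
  by move=> a b; rewrite !inX => ha hb; apply: (Xclique simp ha hb).
have cY : forall a b, a \notin X -> b \notin X -> a != b -> e a b.
  by move=> a b; rewrite !notX => ha hb; apply: (Yclique simp ha hb).
have ch : forall x x' y y', x \in X -> x' \in X -> y \notin X -> y' \notin X ->
    e x y -> ~~ e x' y -> e x' y' -> ~~ e x y' -> False.
  by move=> x x' y y'; rewrite !inX -!inY_cn => h1 h2 h3 h4; apply: (chainX simp h1 h2 h3 h4).
have uX : u \in X by rewrite inX /cnbhd eqxx.
case: (boolP [exists w, [forall t, (t != w) ==> e w t]]) => [/existsP [w /forallP wu] | /existsPn nU].
- have uw' : forall t, t != w -> e t w by move=> t tnw; rewrite es // (implyP (wu t)).
  have uw : u != w.
    apply/eqP => E; have [t tu] := other_ex u.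
    apply: (tw (u:=u) (v:=t)); split; first by rewrite eq_sym.
    move=> z; rewrite /cnbhd.
    have eut : e u t by rewrite E (implyP (wu t)) // -E.
    case: (eqVneq z u) => [->|zu] /=; first by rewrite es // orbT.
    have euz : e u z by rewrite E (implyP (wu z)) // -E.
    case: (eqVneq z t) => [->//|zt] /=; rewrite euz.
    by rewrite (simp _ _ eut euz) // eq_sym.
  pose T' := {x : T | x != w}.
  pose e' : rel T' := fun a b => e (val a) (val b).
  pose X' : {set T'} := [set v | val v \in X].
  have sym' : symmetric e' by move=> a b; exact: sym.
  have irr' : irreflexive e' by move=> a; exact: irr.
  have tw' : twin_free e'.
    move=> a b [ab H]; apply: (tw (u:=val a) (v:=val b)); split.
      by rewrite (inj_eq val_inj).
    move=> z; case: (eqVneq z w) => [->|zw].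
      by rewrite /cnbhd (uw' _ (valP a)) (uw' _ (valP b)) !orbT.
    by have := H (Sub z zw); rewrite /cnbhd /e' -!(inj_eq val_inj) /=.
  have cX' : forall a b, a \in X' -> b \in X' -> a != b -> e' a b.
    move=> a b; rewrite !inE -(inj_eq val_inj) => ha hb nab.
    by apply: cX => //; rewrite inX.
  have cY' : forall a b, a \notin X' -> b \notin X' -> a != b -> e' a b.
    move=> a b; rewrite !inE -(inj_eq val_inj) => ha hb nab.
    by apply: cY => //; rewrite inX.
  have ch' : forall x x' y y', x \in X' -> x' \in X' -> y \notin X' -> y' \notin X' ->
      e' x y -> ~~ e' x' y -> e' x' y' -> ~~ e' x y' -> False.
    move=> x x' y y'; rewrite !inE => h1 h2 h3 h4 h5 h6 h7 h8.
    by apply: (ch (val x) (val x') (val y) (val y')) => //; rewrite inX.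
  have nu' : forall v : T', exists w', (w' != v) && ~~ e' v w'.
    move=> v.
    case: (boolP [exists t, (t != val v) && ~~ e (val v) t]) => [/existsP [t /andP [tv nvt]] | /existsPn H].
      have tw0 : t != w by apply/eqP => E; move: nvt; rewrite E (uw' _ (valP v)).
      exists (Sub t tw0); rewrite -(inj_eq val_inj) /e' SubK tv /=.
      by rewrite nvt.
    exfalso; apply: (tw (u:=val v) (v:=w)); split; first exact: (valP v).
    have vu : forall t, cnbhd e (val v) t.
      move=> t; rewrite /cnbhd; case: (eqVneq t (val v)) => //= tv.
      by move: (H t); rewrite tv /= negbK.
    move=> z; rewrite vu /cnbhd; case: (eqVneq z w) => //= zw.
    by rewrite (implyP (wu z)).
  set n := #|X'|.-1.
  have hX' : #|X'| = n.+1.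
    have : 0 < #|X'|.
      by apply/card_gt0P; exists (Sub u uw); rewrite inE SubK.
    by rewrite /n; case: #|X'|.
  have [h [hb hrel]] := L_iso sym' irr' tw' cX' cY' ch' nu' hX'.
  right; exists n.
  pose F (o : option (bool * 'I_n.+1)) : T := if o is Some a then val (h a) else w.
  exists F; split.
    case: hb => hi hh hi'.
    exists (fun v => if insub v is Some v' then Some (hi v') else None).
      move=> [a|] /=; first by rewrite valK hh.
      by rewrite insubN // eqxx.
    move=> v /=; case: insubP => [v' _ <-|]; first by rewrite /F hi'.
    by rewrite negbK => /eqP ->.
  move=> [a|] [b|] /=.
  + exact: hrel.
  + exact: (uw' _ (valP (h a))).
  + exact: (implyP (wu (val (h b))) (valP (h b))).
  + exact: irr.
- have nu : forall v, exists w, (w != v) && ~~ e v w.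
    move=> v; have /forallPn [w] := nU v; rewrite negb_imply => h; by exists w.
  set n := #|X|.-1.
  have [v0 euv0] := nbr_ex u.
  have c2X : 1 < #|X|.
    have : [set u; v0] \subset X.
      by apply/subsetP => z; rewrite !inE => /orP [/eqP ->|/eqP ->]; rewrite /cnbhd ?eqxx ?euv0 ?orbT.
    move/subset_leq_card; rewrite cards2 (ne_e euv0); exact: leq_trans.
  have hX : #|X| = n.+1 by rewrite /n; move: c2X; case: #|X|.
  left; exists n; split; first by rewrite /n; move: c2X; case: #|X| => [|[]].
  exact: (L_iso sym irr tw cX cY ch nu hX).
Qed.
End Str.


Lemma opo_points (T : finType) (e : rel T) (P : Type) (pt : T -> P) (cont : T -> P -> bool) :
  symmetric e -> irreflexive e ->
  (forall v w, e v w -> cont w (pt v) || cont v (pt w)) ->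
  (forall v w q, cont v q -> cont w q -> v != w -> e v w) ->
  one_perfectly_orientable e.
Proof.
move=> sym irr H1 H2.
pose o v w := [&& e v w, cont w (pt v) & (cont v (pt w) ==> (enum_rank v < enum_rank w))].
exists o; split; first split.
- by move=> u v /andP [].
- move=> u v euv; rewrite /o euv sym euv /=.
  have uv : u != v by apply: contraTneq euv => ->; rewrite irr.
  have ruv : enum_rank u != enum_rank v by rewrite (inj_eq enum_rank_inj).
  move: (H1 _ _ euv) ruv; rewrite -val_eqE /=.
  case: (cont v (pt u)); case: (cont u (pt v)) => //= _; lia.
- move=> v u w /and3P [_ cu _] /and3P [_ cw _] uw; exact: H2 cu cw uw.
Qed.

Section R.
Variable n : nat.
Definition lo (a : option (bool * 'I_n.+1)) : nat :=
  match a with None => 0 | Some (false, _) => 0 | Some (true, j) => n.+1 - j end.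
Definition hi (a : option (bool * 'I_n.+1)) : nat :=
  match a with None => n.+1 | Some (false, i) => i | Some (true, _) => n.+1 end.
Definition ov a b := (lo a <= hi b) && (lo b <= hi a).

Lemma cn_ov a b : cnbhd (@raft_K1_rel n) a b = ov a b.
Proof.
rewrite /cnbhd /ov.
case: a => [[[] i]|]; case: b => [[[] j]|] //=; rewrite /raft_rel /=.
all: rewrite /= ?xpair_eqE /= -?val_eqE /=.
all: try (case: (eqVneq i j) => [->|->]; rewrite ?eqxx ?orbT /=).
all: try move: (ltn_ord i); try move: (ltn_ord j); lia.
Qed.

Definition cont (v : 'I_3 * option (bool * 'I_n.+1)) (q : nat * nat) :=
  (v.1 <= q.1 <= v.1.+1) && (lo v.2 <= q.2 <= hi v.2).
Definition pt (v : 'I_3 * option (bool * 'I_n.+1)) : nat * nat :=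
  match nat_of_ord v.1 with
  | 0 => (1, lo v.2)
  | 1 => if v.2 is Some (false, _) then (2, hi v.2) else (1, lo v.2)
  | _ => (2, hi v.2)
  end.

Lemma cnP3 (p q : 'I_3) : cnbhd P3_rel p q = (p <= q.+1) && (q <= p.+1).
Proof.
rewrite /cnbhd /P3_rel -val_eqE /=; move: (ltn_ord p) (ltn_ord q); lia.
Qed.

Lemma opo_K1 : one_perfectly_orientable (strong_prod P3_rel (@raft_K1_rel n)).
Proof.
apply: (@opo_points _ _ _ pt cont).
- move=> [p a] [q b]; rewrite /strong_prod /= !cnP3 !cn_ov /ov eq_sym.
  congr (_ && _); apply/idP/idP; lia.
- by move=> x; rewrite /strong_prod eqxx.
- move=> [p a] [q b] /and3P [_]; rewrite cnP3 cn_ov /ov /=.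
  case: p => [[|[|[|p]]] hp] //; case: q => [[|[|[|q]]] hq] //;
  case: a => [[[] i]|]; case: b => [[[] j]|];
  rewrite /cont /pt /=; try move: (ltn_ord i); try move: (ltn_ord j); lia.
- move=> [p a] [q b] [s t]; rewrite /cont /= => /andP [h1 h2] /andP [h3 h4] ne.
  rewrite /strong_prod ne cnP3 cn_ov /ov /=; lia.
Qed.
End R.


Ltac vmrhs := match goal with |- _ = ?r => let v := eval vm_compute in r in change r with v end.

Lemma p3_in (T : finType) (e : rel T) : simple_graph e -> connected_graph e ->
  twin_free e -> 1 < #|T| -> exists phi : 'I_3 -> T, emb P3_rel e phi.
Proof.
move=> sg conn tw c2; have sym := proj1 sg; have irr := proj2 sg.
case: (boolP [exists a, exists b, exists c, [&& e a b, e b c, a != c & ~~ e a c]]).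
- case/existsP => a /existsP [b /existsP [c /and4P [eab ebc ac nac]]].
  have eba : e b a by rewrite sym. have ecb : e c b by rewrite sym.
  have nca : ~~ e c a by rewrite sym.
  have ab := ne_of sg eab; have bc := ne_of sg ebc.
  exists (fun i => nth a [:: a; b; c] i); apply: emb_nth => //.
    by rewrite /= !inE !negb_or ab ac bc.
  move=> [[|[|[|i]]] hi] [[|[|[|j]]] hj] //=; vmrhs; rewrite ?irr //; exact: negbTE.
- move/existsPn => H.
  have tr : forall a b c, e a b -> e b c -> a != c -> e a c.
    move=> a b c eab ebc ac; move: (H a) => /existsPn /(_ b) /existsPn /(_ c).
    by rewrite eab ebc ac /= negbK.
  have comp : forall x y, x != y -> e x y.
    move=> x y xy; have := conn x y; case/connectP => p.
    elim: p x xy => [|a p IH] x xy /=; first by move=> _ E; rewrite E eqxx in xy.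
    case/andP => exa pth E.
    case: (eqVneq a y) => [<-//|ay].
    exact: (tr _ _ _ exa (IH a ay pth E) xy).
  have [u _] : exists u : T, u \in T by apply/card_gt0P; apply: ltn_trans c2.
  have [t tu] := other_ex c2 u.
  exfalso; apply: (tw u t); split; first by rewrite eq_sym.
  move=> z; rewrite /cnbhd; case: (eqVneq z u) => [->|zu] /=.
    by rewrite ?eqxx comp ?orbT // eq_sym.
  case: (eqVneq z t) => [->|zt] /=; first by rewrite comp // eq_sym.
  by rewrite !comp // eq_sym.
Qed.

Definition psi n : 'I_4 -> bool * 'I_n.+1 := fun i =>
  nth (false, ord0) [:: (false, ord0); (false, ord_max); (true, ord_max); (true, ord0)] i.

Lemma raft_p4 n : 1 <= n -> emb p4_rel (@raft_rel n) (@psi n).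
Proof.
move=> n1; apply: emb_nth => //.
  rewrite /= !inE !xpair_eqE /= -!val_eqE /=; lia.
move=> [[|[|[|[|i]]]] hi] [[|[|[|[|j]]]] hj] //=; vmrhs;
  rewrite /raft_rel /= ?xpair_eqE /= -?val_eqE /=; lia.
Qed.

Lemma K1_some n : emb (@raft_rel n) (@raft_K1_rel n) Some.
Proof. by split => // a b [->]. Qed.

Definition chi : 'I_3 -> option (bool * 'I_1) := fun i =>
  nth None [:: Some (false, ord0); None; Some (true, ord0)] i.

Lemma chi_rel i j : @raft_K1_rel 0 (chi i) (chi j) = P3_rel i j.
Proof. by move: i j => [[|[|[|i]]] hi] [[|[|[|j]]] hj]. Qed.

Lemma chi_bij : bijective chi.
Proof.
apply: inj_card_bij; last by rewrite card_option card_prod card_bool !card_ord.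
move=> [[|[|[|i]]] hi] [[|[|[|j]]] hj] //= E; try (by case: E); exact: val_inj.
Qed.

Lemma p4_or_p3 (T : finType) (e : rel T) : raft_like e ->
  graph_iso P3_rel e \/ exists phi : 'I_4 -> T, emb p4_rel e phi.
Proof.
case => [[n [n1 [f [fb fe]]]] | [n [f [fb fe]]]].
- right; exists (f \o @psi n); apply: emb_comp (raft_p4 n1) _.
  by split; [exact: bij_inj | exact: fe].
- case: n f fb fe => [|n] f fb fe.
  + left; exists (f \o chi); split; first exact: bij_comp fb chi_bij.
    by move=> i j /=; rewrite fe chi_rel.
  + right; exists (f \o Some \o @psi n.+1).
    apply: emb_comp (emb_comp (raft_p4 (n:=n.+1) isT) (K1_some _)) _.
    by split; [exact: bij_inj | exact: fe].
Qed.

Lemma raft_emb (T : finType) (e : rel T) : raft_like e ->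
  exists n (g : T -> option (bool * 'I_n.+1)), emb e (@raft_K1_rel n) g.
Proof.
case => [[n [_ iso]] | [n iso]].
- have [g hg] := iso_emb_inv iso; exists n, (Some \o g).
  exact: emb_comp hg (K1_some n).
- by have [g hg] := iso_emb_inv iso; exists n, g.
Qed.

Theorem lemma21 (T1 T2 : finType) (e1 : rel T1) (e2 : rel T2) :
  simple_graph e1 -> simple_graph e2 ->
  connected_graph e1 -> connected_graph e2 ->
  1 < #|T1| -> 1 < #|T2| ->
  twin_free e1 -> twin_free e2 ->
  (one_perfectly_orientable (strong_prod e1 e2) <->
   (graph_iso P3_rel e1 /\ raft_like e2) \/
   (graph_iso P3_rel e2 /\ raft_like e1)).
Proof.
move=> sg1 sg2 cn1 cn2 c1 c2 tw1 tw2; split.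
- move=> Ho.
  have [f1 h1] := p3_in sg1 cn1 tw1 c1.
  have [f2 h2] := p3_in sg2 cn2 tw2 c2.
  have r2 : raft_like e2.
    apply: (structure sg2 cn2 tw2 c2); apply: (opo_emb _ Ho).
    exact: emb_prod h1 (emb_id e2).
  have r1 : raft_like e1.
    apply: (structure sg1 cn1 tw1 c1); apply: (opo_emb _ Ho).
    exact: emb_comp (emb_prod h2 (emb_id e1)) (emb_swap e2 e1).
  case: (p4_or_p3 r1) => [i1|[g1 k1]]; first by left.
  case: (p4_or_p3 r2) => [i2|[g2 k2]]; first by right.
  exfalso; apply: no_p4p4; apply: (opo_emb _ Ho); exact: emb_prod k1 k2.
- case => [[i1 r2]|[i2 r1]].
  + have [g1 h1] := iso_emb_inv i1.
    have [n [g2 h2]] := raft_emb r2.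
    apply: (opo_emb _ (opo_K1 n)); exact: emb_prod h1 h2.
  + have [g2 h2] := iso_emb_inv i2.
    have [n [g1 h1]] := raft_emb r1.
    apply: (opo_emb _ (opo_K1 n)).
    exact: emb_comp (emb_swap e1 e2) (emb_prod h2 h1).
Qed.
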